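(* Let $T$ be a tree rooted at a vertex $v$, let $S$ be a dominating set of $T$, let $A\subseteq a_1(S)$, let $N=N(A)\cap N_1(S)$, and set $S'=(S\setminus A)\cup N$. Suppose every vertex of $A$ has the same depth in $T$. Then (i) $|S'|\ge |S|$; (ii) every vertex of $A$, and every descendant of a vertex of $A$, is dominated by $S'$ (i.e. lies in $S'$ or is adjacent to a vertex of $S'$). If in addition $S'$ is a dominating set and every vertex of $N$ is a child of some vertex of $A$, then (iii) no vertex of $N$ is adjacent to any other vertex of $S'$, and hence $N\subseteq a(S')$; (iv) every vertex $x\in a(S)$ which lies in $S'\setminus a(S')$ is a grandchild of some vertex of $N$, and the parent of $x$ is not in $S'$.
   Context: A dominating set of a graph $G=(V,E)$ is a set $S\subseteq V$ such that every vertex is in $S$ or adjacent to a vertex of $S$. $N(v)$, $N[v]=N(v)\cup\{v\}$ are open/closed neighbourhoods, and for a set $A$, $N(A)=\bigcup_{a\in A}N(a)$. For a dominating set $S$: $a(S)=\{u\in S: S\setminus\{u\}\text{ is not dominating}\}$ (critical vertices; vertices of $S\setminus a(S)$ are called supported); $N_1(S)=\{u\in V\setminus S: |N[u]\cap S|=1\}$; $N_2(S)=\{u\in V\setminus S: |N[u]\cap S|\ge 2\}$; $a_1(S)=\{u\in a(S): N[u]\cap N_1(S)\ne\emptyset\}$; $a_2(S)=\{u\in a(S): N[u]\cap N_1(S)=\emptyset\}$. In a tree rooted at $v$, the depth of a vertex is its distance to $v$; $x$ is a descendant of $y$ if $y$ lies on the path from $x$ to $v$; child/grandchild means a descendant at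 distance one/two, and parent is the inverse of child. *)

(* Defs.v *)
From mathcomp Require Import all_boot all_order.
Set Implicit Arguments. Unset Strict Implicit. Unset Printing Implicit Defensive.

Section Graphs.
Variables (T : finType) (e : rel T).

Definition simple_graph : Prop := symmetric e /\ irreflexive e.

Definition connected_graph : Prop :=
  forall x y : T, exists p : seq T, path e x p /\ last x p = y.
Definition unique_simple_paths : Prop :=
  forall (x : T) (p q : seq T), path e x p -> path e x q ->
    uniq (x :: p) -> uniq (x :: q) -> last x p = last x q -> p = q.
Definition is_tree : Prop :=
  simple_graph /\ connected_graph /\ unique_simple_paths.

Definition is_dist (x y : T) (k : nat) : Prop :=
  (exists p : seq T, [/\ path e x p, last x p = y & size p = k]) /\
  (forall p : seq T, path e x p -> last x p = y -> k <= size p).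

(* rooted at v: x is a descendant of y iff y lies on the (unique simple)
   path from x to v *)
Definition descendant (v x y : T) : Prop :=
  exists p : seq T, [/\ path e x p, last x p = v, uniq (x :: p) & y \in x :: p].
Definition child (v x y : T) : Prop := descendant v x y /\ is_dist x y 1.
Definition grandchild (v x y : T) : Prop := descendant v x y /\ is_dist x y 2.
Definition depth_is (v x : T) (k : nat) : Prop := is_dist x v k.

Definition nbh (u : T) : {set T} := [set w | e u w].
Definition cnbh (u : T) : {set T} := u |: nbh u.
Definition nbhs (A : {set T}) : {set T} := \bigcup_(a in A) nbh a.

Definition dominated (S : {set T}) (u : T) : bool :=
  (u \in S) || [exists s in S, e u s].
Definition dominating (S : {set T}) : bool := [forall u, dominated S u].

Definition crit (S : {set T}) : {set T} :=
  [set u in S | ~~ dominating (S :\ u)].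
Definition N1 (S : {set T}) : {set T} :=
  [set u | (u \notin S) && (#|cnbh u :&: S| == 1)].
Definition N2 (S : {set T}) : {set T} :=
  [set u | (u \notin S) && (2 <= #|cnbh u :&: S|)].
Definition crit1 (S : {set T}) : {set T} :=
  [set u in crit S | cnbh u :&: N1 S != set0].
Definition crit2 (S : {set T}) : {set T} :=
  [set u in crit S | cnbh u :&: N1 S == set0].
End Graphs.

(* Main.v *)
Require Import Defs.
From mathcomp Require Import all_boot all_order.
From mathcomp Require Import zify.
Set Implicit Arguments. Unset Strict Implicit.

Definition sp (T : finType) (e : rel T) (v x : T) (p : seq T) : bool :=
  [&& path e x p, last x p == v & uniq (x :: p)].

Lemma sp_ex (T : finType) (e : rel T) v x : is_tree e -> exists p, sp e v x p.
Proof.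
move=> [_ [con _]]; have [p [pp lp]] := con x v.
rewrite -lp; case: (shortenP pp) => p' pp' up' _.
by exists p'; rewrite /sp pp' up' eqxx.
Qed.

Lemma sp_uniq (T : finType) (e : rel T) v x p q :
  is_tree e -> sp e v x p -> sp e v x q -> p = q.
Proof.
move=> [_ [_ un]] /and3P [pp /eqP lp up] /and3P [pq /eqP lq uq].
apply: (un x) => //; by rewrite lp lq.
Qed.

Lemma sp_suffix (T : finType) (e : rel T) v x p y :
  sp e v x p -> y \in p -> exists p1 q, p = p1 ++ y :: q /\ sp e v y q.
Proof.
move=> H yp; case: (splitPr yp) H => p1 q /and3P [pp /eqP lp up].
exists p1, q; split => //.
move: pp lp up; rewrite cat_path last_cat => /andP [_ /= /andP [_ pq]] lq.
move=> /andP [_]; rewrite cat_uniq => /and3P [_ _ uq].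
by rewrite /sp pq lq eqxx uq.
Qed.

Lemma sp_sizelt (T : finType) (e : rel T) v x p y q :
  is_tree e -> sp e v x p -> y \in p -> sp e v y q -> size q < size p.
Proof.
move=> tr sx yp sy; have [p1 [q' [E sq']]] := sp_suffix sx yp.
rewrite (sp_uniq tr sy sq') E size_cat /=; rewrite addnS ltnS; exact: leq_addl.
Qed.

Lemma sp_adj (T : finType) (e : rel T) v x y p q :
  is_tree e -> e x y -> sp e v x p -> sp e v y q -> p = y :: q \/ q = x :: p.
Proof.
move=> tr exy sx sy.
have [[sym irr] _] := tr.
case xq: (x \in q).
  right; have [p1 [q' [E sq']]] := sp_suffix sy xq.
  have -> := sp_uniq tr sx sq'.
  apply: (sp_uniq tr sy).
  move: sq' sy; rewrite /sp E => /and3P [pq' lq' uq'] /and3P [_ _ u].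
  move: u; rewrite /= mem_cat negb_or => /andP [/andP [_ ->] _].
  move: uq'; rewrite /= => /andP [-> ->]; by rewrite sym exy pq' lq'.
left; apply: (sp_uniq tr sx).
move: sy => /and3P [pq lq /= /andP [yq uq]].
rewrite /sp /= exy pq lq yq uq in_cons xq orbF !andbT.
by apply/eqP => E'; move: exy; rewrite E' irr.
Qed.

Lemma sp_adj_size (T : finType) (e : rel T) v x y p q :
  is_tree e -> e x y -> sp e v x p -> sp e v y q -> size p != size q.
Proof.
move=> tr exy sx sy; case: (sp_adj tr exy sx sy) => -> /=; apply/eqP; lia.
Qed.

Lemma depth_sp (T : finType) (e : rel T) v x p k :
  is_tree e -> sp e v x p -> depth_is e v x k -> k = size p.
Proof.
move=> tr sx [[w [pw lw sw]] H].
move: (sx) => /and3P [pp /eqP lp up].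
apply/eqP; rewrite eqn_leq H //= -sw.
move: sx; rewrite -lw; case: (shortenP pw) => p' pp' up' sub sx.
have sp' : sp e (last x p') x p' by rewrite /sp pp' eqxx up'.
rewrite -(sp_uniq tr sp' sx).
by apply: uniq_leq_size => //; case/andP: up'.
Qed.

Lemma desc_sp (T : finType) (e : rel T) v x p y :
  is_tree e -> sp e v x p -> descendant e v x y -> y \in x :: p.
Proof.
move=> tr sx [q [pq lq uq yq]].
have sq : sp e v x q by rewrite /sp pq lq eqxx uq.
by rewrite (sp_uniq tr sx sq).
Qed.

Lemma sp_desc (T : finType) (e : rel T) v x p y :
  sp e v x p -> y \in x :: p -> descendant e v x y.
Proof. by move=> /and3P [pp /eqP lp up] yp; exists p. Qed.

Lemma dist1_adj (T : finType) (e : rel T) x y : is_dist e x y 1 -> e x y.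
Proof.
move=> [[[|z [|w q]] [pp lp sp]] _] //=.
by move: pp lp => /= /andP [exz _] <-.
Qed.

Lemma child_sp (T : finType) (e : rel T) v n a p q :
  is_tree e -> child e v n a -> sp e v n p -> sp e v a q -> p = a :: q.
Proof.
move=> tr [dn d1] sn sa.
have ena := dist1_adj d1.
case: (sp_adj tr ena sn sa) => // E.
have := desc_sp tr sn dn.
have [[_ irr] _] := tr.
rewrite in_cons => /orP [/eqP E'|ap]; first by move: ena; rewrite E' irr.
have := sp_sizelt tr sn ap sa; rewrite E /= => /ltnW; by rewrite ltnn.
Qed.

Lemma card1_eq (T : finType) (X : {set T}) x y : #|X| == 1 -> x \in X -> y \in X -> x = y.
Proof. by move=> /cards1P [z ->]; rewrite !in_set1 => /eqP -> /eqP ->. Qed.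

Lemma in_cnbh (T : finType) (e : rel T) u w : (w \in cnbh e u) = (w == u) || e u w.
Proof. by rewrite /cnbh in_setU1 /nbh inE. Qed.

Lemma in_nbhsP (T : finType) (e : rel T) (A : {set T}) u : reflect (exists2 a, a \in A & e a u) (u \in nbhs e A).
Proof.
apply: (iffP bigcupP) => [[a aA]|[a aA eau]]; first by rewrite /nbh inE; exists a.
by exists a => //; rewrite /nbh inE.
Qed.

Lemma K1 (T : finType) (e : rel T) (S A : {set T}) u s : symmetric e ->
  u \in nbhs e A :&: N1 e S -> A \subset S -> s \in S -> e u s -> s \in A.
Proof.
move=> sym; rewrite inE => /andP [/in_nbhsP [a aA eau]]; rewrite inE => /andP [_ c1] sAS sS eus.
have aS : a \in S by apply: (subsetP sAS).
suff -> : s = a by [].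
apply: (card1_eq c1); rewrite inE in_cnbh ?eus ?sS ?orbT //.
by rewrite sym eau aS orbT.
Qed.

Lemma parent_of (T : finType) (e : rel T) v x s a px ps pa :
  is_tree e -> e x s -> sp e v x px -> sp e v s ps -> sp e v a pa ->
  a \in x :: px -> size pa = size ps -> px = s :: ps.
Proof.
move=> tr exs sx ss sa ax E.
case: (sp_adj tr exs sx ss) => // E2.
have : a \in ps by rewrite E2.
move=> aps; have := sp_sizelt tr ss aps sa; by rewrite E ltnn.
Qed.

Lemma dom_ex (T : finType) (e : rel T) (S : {set T}) u : dominating e S -> u \notin S -> exists2 s, s \in S & e u s.
Proof.
move=> /forallP /(_ u); rewrite /dominated => /orP [->//|/existsP [s /andP [sS eus]]] _.
by exists s.
Qed.

Unset Implicit Arguments. Set Strict Implicit.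

Theorem lemma4p3 (T : finType) (e : rel T) (v : T) (S A : {set T}) :
  is_tree e ->
  dominating e S ->
  A \subset crit1 e S ->
  (exists k, forall a, a \in A -> depth_is e v a k) ->
  let N := nbhs e A :&: N1 e S in
  let S' := (S :\: A) :|: N in
  (* (i) *) #|S| <= #|S'| /\
  (* (ii) *) (forall x : T, (x \in A \/ exists2 a, a \in A & descendant e v x a) ->
                dominated e S' x) /\
  (dominating e S' -> (forall n, n \in N -> exists2 a, a \in A & child e v n a) ->
    (* (iii) *)
    ((forall n s, n \in N -> s \in S' -> s != n -> ~~ e n s) /\ N \subset crit e S') /\
    (* (iv) *)
    (forall x, x \in crit e S -> x \in S' -> x \notin crit e S' ->
       (exists2 n, n \in N & grandchild e v x n) /\
       (exists p, child e v x p /\ p \notin S'))).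
Proof.
move=> tr domS sA [k dep] N S'.
have [[sym irr] _] := tr.
have spx : forall x, exists p, sp e v x p by move=> x; exact: sp_ex.
have sAS : A \subset S.
  by apply/subsetP => a /(subsetP sA); rewrite !inE => /andP [/andP [-> _] _].
have inS' : forall x, (x \in S') = ((x \in S) && (x \notin A)) || (x \in N).
  by move=> x; rewrite /S' !inE andbC.
have NS : forall u, u \in N -> u \notin S.
  by move=> u; rewrite /N !inE => /andP [_ /andP [-> _]].
have K : forall u s, u \in N -> s \in S -> e u s -> s \in A.
  by move=> u s uN; exact: K1 sym uN sAS.
have priv : forall a, a \in A -> exists2 u, e a u & u \in N.
  move=> a aA; have := subsetP sA a aA; rewrite !inE => /andP [/andP [aS _]] /set0Pn [u].
  rewrite inE in_cnbh inE => /andP [/orP [/eqP ua|eau] /andP [uS c1]].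
    by move: uS; rewrite ua aS.
  exists u => //; rewrite /N inE; apply/andP; split; first by apply/in_nbhsP; exists a.
  by rewrite inE uS c1.
have depA : forall a pa, a \in A -> sp e v a pa -> size pa = k.
  by move=> a pa aA sa; rewrite (depth_sp tr sa (dep a aA)).
split.
  rewrite /S' cardsU.
  have -> : (S :\: A) :&: N = set0.
    apply/eqP; rewrite -subset0; apply/subsetP => x; rewrite inE => /andP [xSA xN].
    by move: xSA; rewrite inE (negbTE (NS x xN)) andbF.
  rewrite cards0 subn0 -(cardsID A S) (setIidPr sAS) addnC leq_add2l.
  pose g := fun u => odflt u [pick s in cnbh e u :&: S].
  apply: leq_trans (leq_imset_card g N).
  apply: subset_leq_card; apply/subsetP => a aA.
  have [u eau uN] := priv a aA.
  apply/imsetP; exists u => //.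
  have aX : a \in cnbh e u :&: S by rewrite inE in_cnbh sym eau orbT (subsetP sAS).
  have c1 : #|cnbh e u :&: S| == 1 by move: uN; rewrite /N !inE => /andP [_ /andP [_ ->]].
  rewrite /g; case: pickP => [s /= sX|none]; first exact: card1_eq c1 aX sX.
  by move: (none a); rewrite aX.
split.
  move=> x hx.
  have domx : forall s, s \in S' -> e x s -> dominated e S' x.
    by move=> s sS' exs; apply/orP; right; apply/existsP; exists s; rewrite sS' exs.
  case xA: (x \in A).
    have [u exu uN] := priv x xA; apply: (domx u) => //; by rewrite inS' uN orbT.
  case/boolP: (x \in S) => xS.
    by rewrite /dominated inS' xS xA.
  case: hx => [|[a aA dxa]]; first by rewrite xA.
  have [s sS exs] := dom_ex domS xS.
  case sA': (s \in A); last by apply: (domx s); rewrite // inS' sS sA'.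
  case/boolP: (x \in N1 e S) => xN1.
    apply/orP; left; rewrite inS' /N inE xN1 andbT; apply/orP; right.
    by apply/in_nbhsP; exists s => //; rewrite sym.
  have [s' s'X s's] : exists2 s', s' \in cnbh e x :&: S & s' != s.
    case/boolP: [exists s', (s' \in cnbh e x :&: S) && (s' != s)] => [/existsP [s' /andP [? ?]]|H].
      by exists s'.
    exfalso; move: xN1; rewrite inE xS /=.
    have -> : cnbh e x :&: S = [set s].
      apply/setP => z; rewrite in_set1; apply/idP/idP => [zX|/eqP ->].
        by move: H => /existsPn /(_ z); rewrite zX /= negbK.
      by rewrite inE in_cnbh exs orbT sS.
    by rewrite cards1 eqxx.
  move: s'X; rewrite inE in_cnbh => /andP [/orP [/eqP s'x|exs'] s'S].
    by move: xS; rewrite -s'x s'S.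
  case sA2: (s' \in A); last by apply: (domx s'); rewrite // inS' s'S sA2.
  exfalso.
  have [px sx] := spx x; have [ps ss] := spx s; have [ps' ss'] := spx s'; have [pa sa] := spx a.
  have ax := desc_sp tr sx dxa.
  have E1 := parent_of tr exs sx ss sa ax (etrans (depA a pa aA sa) (esym (depA s ps sA' ss))).
  have E2 := parent_of tr exs' sx ss' sa ax (etrans (depA a pa aA sa) (esym (depA s' ps' sA2 ss'))).
  by move: s's; rewrite E1 in E2; case: E2 => ->; rewrite eqxx.
move=> domS' hch.
have szN : forall n pn, n \in N -> sp e v n pn -> size pn = k.+1.
  move=> n pn nN sn; have [a aA cna] := hch n nN.
  have [pa sa] := spx a.
  by rewrite (child_sp tr cna sn sa) /= (depA a pa aA sa).
have iii : forall n s, n \in N -> s \in S' -> s != n -> ~~ e n s.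
  move=> n s nN; rewrite inS' => /orP [/andP [sS sA']|sN] sn; apply/negP => ens.
    by move: sA'; rewrite (K n s nN sS ens).
  have [pn spn] := spx n; have [ps sps] := spx s.
  by move: (sp_adj_size tr ens spn sps); rewrite (szN n pn nN spn) (szN s ps sN sps) eqxx.
split.
  split => //.
  apply/subsetP => n nN.
  have nS' : n \in S' by rewrite inS' nN orbT.
  rewrite /crit inE nS' /=; apply/forallPn; exists n.
  rewrite /dominated negb_or; apply/andP; split; first by rewrite !inE eqxx.
  apply/existsPn => s; apply/negP => /andP [sX ens].
  move: sX => /setD1P [sn sS'].
  by move: (iii n s nN sS' sn); rewrite ens.
move=> x xc xS' xnc.
have xS : x \in S by move: xc; rewrite inE => /andP [].
have xA : x \notin A.
  move: xS'; rewrite inS' => /orP [/andP [_ ->]//|xN]; by move: (NS x xN); rewrite xS.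
have F1 : forall u, u \in N -> ~~ e u x.
  by move=> u uN; apply/negP => eux; move: (K u x uN xS eux); rewrite (negbTE xA).
have domx' : dominating e (S' :\ x) by move: xnc; rewrite inE xS' /= negbK.
have [w hw] : exists w, ~~ dominated e (S :\ x) w by move: xc; rewrite inE xS /= => /forallPn.
have hw2 : forall s, s \in S -> s != x -> ~~ e w s.
  move=> s sS sx; apply/negP => ews; move: hw; rewrite /dominated negb_or => /andP [_ /existsPn /(_ s)].
  by rewrite !inE sx sS ews.
have xnS'x : x \notin S' :\ x by rewrite !inE eqxx.
case: (eqVneq w x) => [wx|wx].
  exfalso; have [s /setD1P [sx sS'] exs] := dom_ex domx' xnS'x.
  move: sS'; rewrite inS' => /orP [/andP [sS _]|sN].
    by move: (hw2 s sS sx); rewrite wx exs.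
  by move: (F1 s sN); rewrite sym exs.
have wS : w \notin S by move: hw; rewrite /dominated negb_or !inE wx /= => /andP [].
have ewx : e w x.
  have [s sS ews] := dom_ex domS wS.
  case: (eqVneq s x) => [<-//|sx]; by move: (hw2 s sS sx); rewrite ews.
have wS' : w \notin S'.
  rewrite inS' negb_or (negbTE wS) /=; apply/negP => wN.
  by move: (F1 w wN); rewrite ewx.
have wnS'x : w \notin S' :\ x by apply/negP => /setD1P [_ ws]; move: wS'; rewrite ws.
have [n /setD1P [nx nS'] ewn] := dom_ex domx' wnS'x.
have nN : n \in N.
  move: nS'; rewrite inS' => /orP [/andP [nS _]|//].
  by move: (hw2 n nS nx); rewrite ewn.
have [a aA cna] := hch n nN.
have [px sx] := spx x; have [pw sw] := spx w; have [pn sn] := spx n; have [pa sa] := spx a.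
have Epn := child_sp tr cna sn sa.
have aS : a \in S := subsetP sAS a aA.
have Epw : pw = n :: pn.
  case: (sp_adj tr ewn sw sn) => // E; move: Epn; rewrite E => -[aw _].
  by move: wS; rewrite aw aS.
have exw : e x w by rewrite sym.
have Epx : px = w :: pw.
  case: (sp_adj tr exw sx sw) => // E; move: Epw; rewrite E => -[nx' _].
  by move: (NS n nN); rewrite -nx' xS.
split.
  exists n => //; split.
    by apply: (sp_desc sx); rewrite Epx Epw !inE eqxx !orbT.
  split; first by exists [:: w; n]; rewrite /= exw ewn.
  move=> p; case: p => [|z [|z' p']] //=.
    by move=> _ xn; move: (NS n nN); rewrite -xn xS.
  move=> /andP [exz _] zn; move: exz; rewrite zn => exn.
  by move: (F1 n nN); rewrite sym exn.
exists w; split => //; split.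
  by apply: (sp_desc sx); rewrite Epx !inE eqxx !orbT.
split; first by exists [:: w]; rewrite /= exw.
move=> p; case: p => [|z p'] //= _ xw.
by move: wS; rewrite -xw xS.
Qed.
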